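(* Consider $J=2$ classes with sample sizes $n_1,n_2\ge 2$ and $n=n_1+n_2$. Suppose one of the following holds: (i) $\tilde h_b(1,2)>\tilde h_b(1,1)>\tilde h_b(2,2)$ and $n_1>n_2+1$; (ii) $\tilde h_b(1,2)>\tilde h_b(2,2)>\tilde h_b(1,1)$ and $n_1<n_2-1$; (iii) $\tilde h_b(1,1)>\tilde h_b(1,2)\ge\frac34\tilde h_b(1,1)+\frac14\tilde h_b(2,2)>\tilde h_b(2,2)$ and $n_1>1+\frac{n-1}{2}\Big\{\frac{\tilde h_b(1,1)-\tilde h_b(2,2)}{2\tilde h_b(1,2)-\tilde h_b(1,1)-\tilde h_b(2,2)}\Big\}$; (iv) $\tilde h_b(2,2)>\tilde h_b(1,2)\ge\frac14\tilde h_b(1,1)+\frac34\tilde h_b(2,2)>\tilde h_b(1,1)$ and $n_1<(n-1)\Big\{1-\frac12\frac{\tilde h_b(2,2)-\tilde h_b(1,1)}{2\tilde h_b(1,2)-\tilde h_b(1,1)-\tilde h_b(2,2)}\Big\}$. Then $\tilde\xi_b(1,2)>\max\{\tilde\tau_b(1,2),\tilde\tau_b(2,1)\}$.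
   Context: $\tilde h_b(l,l')$ ($l,l'\in\{1,2\}$) are real numbers with $\tilde h_b(1,2)=\tilde h_b(2,1)$ (in the paper, $\tilde h_b(l,l')=\phi\big[b^{-1}\sum_{i=1}^b\mathrm E\gamma(d_i^{-1}\|\mathbf U_i-\mathbf V_i\|^2)\big]$ for independent $\mathbf U\sim\mathbf F_l$, $\mathbf V\sim\mathbf F_{l'}$ with sub-vectors on clusters of coordinates). $\tilde\xi_b(1,2)=\tilde h_b(1,2)-\frac12[\tilde h_b(1,1)+\tilde h_b(2,2)]$; $\tilde\tau_b(1,2)=\frac{n_1}{n-1}|\tilde h_b(1,2)-\tilde h_b(1,1)|+\frac{n_2-1}{n-1}|\tilde h_b(1,2)-\tilde h_b(2,2)|$; $\tilde\tau_b(2,1)=\frac{n_1-1}{n-1}|\tilde h_b(1,2)-\tilde h_b(1,1)|+\frac{n_2}{n-1}|\tilde h_b(1,2)-\tilde h_b(2,2)|$. *)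

(* Defs.v *)
From Stdlib Require Import Reals.
Open Scope R_scope.

(* h11 = h~_b(1,1), h12 = h~_b(1,2) = h~_b(2,1), h22 = h~_b(2,2). *)
Definition xi12 (h11 h12 h22 : R) : R := h12 - (h11 + h22) / 2.

Definition tau12 (n1 n2 : nat) (h11 h12 h22 : R) : R :=
  let n := INR (n1 + n2) in
  INR n1 / (n - 1) * Rabs (h12 - h11) + (INR n2 - 1) / (n - 1) * Rabs (h12 - h22).

Definition tau21 (n1 n2 : nat) (h11 h12 h22 : R) : R :=
  let n := INR (n1 + n2) in
  (INR n1 - 1) / (n - 1) * Rabs (h12 - h11) + INR n2 / (n - 1) * Rabs (h12 - h22).

(* Main.v *)
Require Import Defs.
From Stdlib Require Import Reals Lra Psatz.
Open Scope R_scope.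

Lemma core (x y h11 h12 h22 : R) : x >= 2 -> y >= 2 ->
  ( (h12 > h11 /\ h11 > h22 /\ x > y + 1)
 \/ (h12 > h22 /\ h22 > h11 /\ x < y - 1)
 \/ (h11 > h12 /\ h12 >= 3/4 * h11 + 1/4 * h22 /\ 3/4 * h11 + 1/4 * h22 > h22 /\
     x > 1 + (x + y - 1) / 2 * ((h11 - h22) / (2 * h12 - h11 - h22)))
 \/ (h22 > h12 /\ h12 >= 1/4 * h11 + 3/4 * h22 /\ 1/4 * h11 + 3/4 * h22 > h11 /\
     x < (x + y - 1) * (1 - 1/2 * ((h22 - h11) / (2 * h12 - h11 - h22)))) ) ->
  h12 - (h11 + h22) / 2 >
  Rmax (x / (x + y - 1) * Rabs (h12 - h11) + (y - 1) / (x + y - 1) * Rabs (h12 - h22))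
       ((x - 1) / (x + y - 1) * Rabs (h12 - h11) + y / (x + y - 1) * Rabs (h12 - h22)).
Proof.
  intros Hx Hy H.
  set (N := x + y - 1).
  assert (HN : N > 0) by (unfold N; lra).
  assert (E1 : forall p q r, p / N * q + r / N * (Rabs (h12 - h22)) = (p * q + r * Rabs (h12 - h22)) / N)
    by (intros; field; lra).
  rewrite !E1.
  assert (K : forall P, P < N * (h12 - (h11 + h22) / 2) -> P / N < h12 - (h11 + h22) / 2).
  { intros P HP. apply (Rmult_lt_reg_l N); [lra|].
    replace (N * (P / N)) with P by (field; lra). lra. }
  apply Rmax_lub_lt; apply K; unfold N in *.
  all: destruct H as [[A [B C]] | [[A [B C]] | [[A [B [C D]]] | [A [B [C D]]]]]].
  all: try (rewrite (Rabs_pos_eq (h12 - h11)) by lra).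
  all: try (rewrite (Rabs_pos_eq (h12 - h22)) by lra).
  all: try (rewrite (Rabs_left (h12 - h11)) by lra).
  all: try (rewrite (Rabs_left (h12 - h22)) by lra).
  all: try nra.
  - set (q := (h11 - h22) / (2 * h12 - h11 - h22)) in D.
    assert (Eq : h11 - h22 = q * (2 * h12 - h11 - h22)) by (unfold q; field; lra).
    assert (P : (x - 1 - (x + y - 1) / 2 * q) * (2 * h12 - h11 - h22) > 0) by (apply Rmult_lt_0_compat; lra).
    nra.
  - set (q := (h22 - h11) / (2 * h12 - h11 - h22)) in D.
    assert (Eq : h22 - h11 = q * (2 * h12 - h11 - h22)) by (unfold q; field; lra).
    assert (P : ((x + y - 1) * (1 - 1/2 * q) - x) * (2 * h12 - h11 - h22) > 0) by (apply Rmult_lt_0_compat; lra).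
    nra.
  - set (q := (h11 - h22) / (2 * h12 - h11 - h22)) in D.
    assert (Eq : h11 - h22 = q * (2 * h12 - h11 - h22)) by (unfold q; field; lra).
    assert (P : (x - 1 - (x + y - 1) / 2 * q) * (2 * h12 - h11 - h22) > 0) by (apply Rmult_lt_0_compat; lra).
    nra.
  - set (q := (h22 - h11) / (2 * h12 - h11 - h22)) in D.
    assert (Eq : h22 - h11 = q * (2 * h12 - h11 - h22)) by (unfold q; field; lra).
    assert (P : ((x + y - 1) * (1 - 1/2 * q) - x) * (2 * h12 - h11 - h22) > 0) by (apply Rmult_lt_0_compat; lra).
    nra.
Qed.

Theorem lemmaA2 (n1 n2 : nat) (h11 h12 h22 : R) :
  (2 <= n1)%nat -> (2 <= n2)%nat ->
  let n := INR (n1 + n2) in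
  ( (h12 > h11 /\ h11 > h22 /\ INR n1 > INR n2 + 1)
 \/ (h12 > h22 /\ h22 > h11 /\ INR n1 < INR n2 - 1)
 \/ (h11 > h12 /\ h12 >= 3/4 * h11 + 1/4 * h22 /\ 3/4 * h11 + 1/4 * h22 > h22 /\
     INR n1 > 1 + (n - 1) / 2 * ((h11 - h22) / (2 * h12 - h11 - h22)))
 \/ (h22 > h12 /\ h12 >= 1/4 * h11 + 3/4 * h22 /\ 1/4 * h11 + 3/4 * h22 > h11 /\
     INR n1 < (n - 1) * (1 - 1/2 * ((h22 - h11) / (2 * h12 - h11 - h22)))) ) ->
  xi12 h11 h12 h22 > Rmax (tau12 n1 n2 h11 h12 h22) (tau21 n1 n2 h11 h12 h22).
Proof.
  intros H1 H2 n H. unfold n, xi12, tau12, tau21 in *.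
  rewrite plus_INR in *.
  apply le_INR in H1. apply le_INR in H2. simpl in H1, H2.
  apply core; lra || exact H.
Qed.
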